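(* Let $q$ be even and $n\ge2$. The unipotent conjugacy classes of type $(2,1,\dots,1)$ in $\mathbf{SL}_n(q)$ are not of type D.
   Context: Unipotent type = sizes of Jordan blocks; type $(2,1,\dots,1)$ means one block of size 2 and $n-2$ blocks of size 1. Conjugacy classes are racks with $x\triangleright y=xyx^{-1}$. A subrack $Y$ is decomposable if $Y=R\sqcup S$ with nonempty subracks $R,S$, $Y\triangleright R=R$, $Y\triangleright S=S$. Type D: a decomposable subrack $R\sqcup S$ with $r\in R,s\in S$ and $r\triangleright(s\triangleright(r\triangleright s))\neq s$. *)

(* Defs.v *)
From HB Require Import structures.
From mathcomp Require Import all_boot all_order all_algebra.
Set Implicit Arguments. Unset Strict Implicit. Unset Printing Implicit Defensive.
Import GRing.Theory.
Local Open Scope ring_scope.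

Section Defs.
Variables (F : finFieldType) (n : nat).
Local Notation M := 'M[F]_n.

Definition rtri (x y : M) : M := x *m y *m invmx x.

Definition SL : {set M} := [set g : M | \det g == 1].

Definition sl_class (x : M) : {set M} := [set rtri g x | g in SL].

(* unipotent of type (2,1,...,1): x - 1 is nilpotent with exactly one Jordan
   block of size 2 and all others of size 1, i.e. (x-1)^2 = 0 and rank(x-1)=1 *)
Definition unipotent_type21 (x : M) : bool :=
  ((x - 1%:M) *m (x - 1%:M) == 0) && (\rank (x - 1%:M) == 1%N).

Definition is_subrack (Y : {set M}) : Prop :=
  forall x y, x \in Y -> y \in Y -> rtri x y \in Y.

Definition rack_act (Y R : {set M}) : {set M} := [set rtri y r | y in Y, r in R].

Definition decomposable_as (Y R S : {set M}) : Prop :=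
  [/\ Y = R :|: S, [disjoint R & S], R != set0 & S != set0] /\
  [/\ is_subrack R, is_subrack S, rack_act Y R = R & rack_act Y S = S].

Definition type_D (X : {set M}) : Prop :=
  exists R S : {set M},
    [/\ R :|: S \subset X, is_subrack (R :|: S), decomposable_as (R :|: S) R S
      & exists r s, [/\ r \in R, s \in S & rtri r (rtri s (rtri r s)) != s]].
End Defs.

(* Main.v *)
Require Import Defs.
From HB Require Import structures.
From mathcomp Require Import all_boot all_order all_algebra all_fingroup all_solvable all_field.
From mathcomp Require Import ring.
Set Implicit Arguments. Unset Strict Implicit. Unset Printing Implicit Defensive.
Import GRing.Theory.
Local Open Scope ring_scope.
Lemma sAr (F : fieldType) (n : nat) (l : F) (X A : 'M[F]_n) : X * (l *: A) = l *: (X * A).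
Proof. by rewrite -!mulmxE scalemxAr. Qed.
Lemma sAl (F : fieldType) (n : nat) (l : F) (X A : 'M[F]_n) : (l *: X) * A = l *: (X * A).
Proof. by rewrite -!mulmxE scalemxAl. Qed.
Lemma char2 (F : finFieldType) : ~~ odd #|F| -> (2%:R : F) = 0.
Proof.
move=> ev; have [p pp chp] := finPcharP F.
have ab := fin_ring_pchar_abelem chp.
have pg := abelem_pgroup ab.
have : p.-nat 2.
  apply: pnat_dvd pg; rewrite cardsT; by rewrite dvdn2.
rewrite pnatE // => /eqP e.
move: chp; rewrite -e => /andP[_ /eqP] //.
Qed.
Lemma rank1_sandwich (F : fieldType) (n : nat) (A X : 'M[F]_n) :
  \rank A = 1%N -> A * X * A = \tr (A * X) *: A.
Proof.
move=> rkA; rewrite -!mulmxE.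
have := mulmx_base A; move: (col_base A) (row_base A); rewrite rkA => c d <-.
have -> : c *m d *m X *m (c *m d) = c *m (d *m X *m c) *m d by rewrite !mulmxA.
rewrite [d *m X *m c]mx11_scalar mul_mx_scalar -scalemxAl.
rewrite mxtrace_mulC mulmxA mxtrace_mulC mulmxA [_ *m c]mx11_scalar mxtrace_scalar.
by rewrite mxE.
Qed.
Lemma Nrel (F : fieldType) (n : nat) (A B : 'M[F]_n) (l : F) :
  A * A = 0 -> B * B = 0 -> A * B * A = l *: A -> B * A * B = l *: B ->
  let N := A + B + A * B in
  N * N = A * B + B * A + l *: N /\ N * (N * N) = l *: N + l *: (N * N).
Proof.
move=> AA BB ABA BAB N.
have AAl X : X * A * A = 0 by rewrite -mulrA AA mulr0.
have BBl X : X * B * B = 0 by rewrite -mulrA BB mulr0.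
have ABAl X : X * A * B * A = l *: (X * A) by rewrite -!mulrA (mulrA A) ABA sAr.
have BABl X : X * B * A * B = l *: (X * B) by rewrite -!mulrA (mulrA B) BAB sAr.
have N2 : N * N = A * B + B * A + l *: N.
  rewrite /N ?mulrDl ?mulrDr ?mulrA ?AA ?BB ?ABA ?BAB ?AAl ?BBl ?ABAl ?BABl ?mul0r ?sAl.
  move: (A*B) (B*A) => P Q; apply/matrixP=> i j; rewrite !mxE; ring.
split=> //.
rewrite N2 /N ?mulrDl ?mulrDr ?mulrA ?AA ?BB ?ABA ?BAB ?AAl ?BBl ?ABAl ?BABl ?mul0r ?sAl ?sAr.
rewrite ?mulrDl ?mulrDr ?mulrA ?AA ?BB ?ABA ?BAB ?AAl ?BBl ?ABAl ?BABl ?mul0r ?sAl.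
move: (A*B) (B*A) => P Q; apply/matrixP=> i j; rewrite !mxE; ring.
Qed.
Lemma halving (F : fieldType) (n : nat) (N : 'M[F]_n) (l : F) :
  (2%:R : F) = 0 -> l != 0 -> N * (N * N) = l *: N + l *: (N * N) ->
  forall k, (1 + N) ^+ (k.*2) = 1 -> (1 + N) ^+ k = 1.
Proof.
move=> two l0 rel.
pose E := l^-1 *: (N * N - l *: N).
have NE : N * E = N.
  rewrite /E sAr mulrBr sAr rel addrK scalerA mulVf ?scale1r //.
have EN : E * N = N.
  rewrite /E sAl mulrBl sAl -mulrA rel addrK scalerA mulVf ?scale1r //.
have EE : E * E = E.
  by rewrite {1}/E sAr mulrBr sAr mulrA EN -/E.
have N2 : N * N = l *: E + l *: N.
  by rewrite /E scalerA divff // scale1r subrK.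
clearbody E.
have span k : exists a b, (1 + N) ^+ k = 1 + a *: E + b *: N.
  elim: k => [|k [a [b IH]]]; first by exists 0, 0; rewrite expr0 !scale0r !addr0.
  exists (a + b * l), (b + 1 + a + b * l).
  rewrite exprSr IH !mulrDl !mulrDr !mul1r !mulr1 ?sAl ?sAr ?EN ?N2 ?scalerDr ?scalerA.
  move: E N {rel NE EN EE N2 IH} => P Q. apply/matrixP=> i j; rewrite !mxE; ring.
have sq c : (c * c) *: E = 0 -> c *: E = 0.
  have [->|c0] := eqVneq c 0; first by rewrite scale0r.
  by move/(congr1 (fun X => c^-1 *: X)); rewrite /= scalerA mulrA mulVf // mul1r scaler0.
have red a b : (a *: E + b *: N) * (a *: E + b *: N) = 0 -> a *: E + b *: N = 0.
  move=> h0.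
  have h : (a * a + b * b * l) *: E + (b * b * l) *: N = 0.
    rewrite -h0 !mulrDl !mulrDr ?sAl ?sAr EE NE EN N2 ?scalerDr ?scalerA.
    have t2 : forall c : F, c + c = 0 by move=> c; rewrite -mulr2n -mulr_natr two mulr0.
    move: E N {rel NE EN EE N2 h0 sq span} => P Q. apply/matrixP=> i j; rewrite !mxE.
    have := t2 (a * b * Q i j). move=> t; rewrite -[LHS]addr0 -t. ring.
  suff [d ed] : exists d, a *: E + b *: N = d *: E.
    by rewrite ed; apply: sq; rewrite -h0 ed sAl sAr EE scalerA.
  have [b0|b0] := eqVneq b 0; first by exists a; rewrite b0 scale0r addr0.
  have bl0 : b * b * l != 0 by rewrite !mulf_neq0.
  have NdE : N = (- (a * a + b * b * l) / (b * b * l)) *: E.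
    apply: (scalerI bl0). rewrite scalerA mulrCA divff // mulr1 scaleNr.
    by apply/eqP; rewrite -addr_eq0 addrC h.
  exists (a + b * (- (a * a + b * b * l) / (b * b * l))).
  by rewrite {1}NdE scalerA scalerDl.
move=> k h; have [a [b e]] := span k.
have z0 : a *: E + b *: N = 0.
  apply: red.
  rewrite -addrA in e.
  move: (a *: E + b *: N) e h => z e h.
  rewrite -muln2 exprM e in h.
  rewrite expr2 mulrDl !mulrDr !mul1r !mulr1 in h.
  have zz : z + z = 0 by rewrite -mulr2n -scaler_nat two scale0r.
  have e2 : 1 + z + (z + z * z) = 1 + (z + z) + z * z by rewrite !addrA.
  rewrite e2 zz addr0 in h.
  by apply: (addrI 1); rewrite h addr0.
by rewrite e -addrA z0 addr0.
Qed.
Lemma period (F : finFieldType) (n : nat) (u w : 'M[F]_n) :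
  w * u = 1 -> exists d, (0 < d)%N /\ u ^+ d = 1.
Proof.
move=> wu.
pose f := fun k : 'I_(#|{: 'M[F]_n}|.+1) => u ^+ k.
have : ~~ injectiveb f.
  apply/negP => /injectiveP inj; have := leq_card f inj.
  by rewrite card_ord ltnn.
move/injectivePn => [i [j ij fij]].
have key : forall a b : nat, (a < b)%N -> u ^+ a = u ^+ b -> exists d, (0 < d)%N /\ u ^+ d = 1.
  move=> a b ab e; exists (b - a)%N; split; first by rewrite subn_gt0.
  have wa : forall m, w ^+ m * u ^+ m = 1.
    elim=> [|m IH]; first by rewrite !expr0 mulr1.
    by rewrite exprSr exprS mulrA -(mulrA _ w) wu mulr1.
  move: e; rewrite -(subnKC (ltnW ab)) exprD => e.
  have := congr1 (fun X => w ^+ a * X) e; rewrite /= mulrA wa mul1r.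
  by rewrite addKn; move/esym.
have [lt|lt|eq] := ltngtP i j.
- exact: key lt fij.
- exact: key lt (esym fij).
- by move: ij; rewrite (val_inj eq) eqxx.
Qed.

Lemma odd_period (F : fieldType) (n : nat) (N : 'M[F]_n) (l : F) :
  (2%:R : F) = 0 -> l != 0 -> N * (N * N) = l *: N + l *: (N * N) ->
  forall d, (0 < d)%N -> (1 + N) ^+ d = 1 -> exists o, odd o /\ (1 + N) ^+ o = 1.
Proof.
move=> two l0 rel d; elim: d {-2}d (leqnn d) => [|m IH] d dm d0 e.
  by move: dm d0; rewrite leqn0 => /eqP ->.
have [od|ev] := boolP (odd d); first by exists d.
have dd : d = (d./2).*2 by rewrite -{1}(odd_double_half d) (negbTE ev).
have h1 : (0 < d./2)%N by move: ev d0; clear; case: d => [|[|k]] //.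
apply: (IH d./2) => //.
- rewrite -ltnS; apply: leq_trans dm; rewrite {2}dd -addnn.
  by rewrite -{1}[d./2]addn0 ltn_add2l.
- by apply: (halving two l0 rel); rewrite -dd.
Qed.
Lemma inv_invol (F : fieldType) (n : nat) (r : 'M[F]_n) : r *m r = 1%:M -> invmx r = r.
Proof.
move=> rr; have [ru _] := mulmx1_unit rr.
by rewrite -[invmx r]mulmx1 -rr mulmxA mulVmx // mul1mx.
Qed.

Lemma class_facts (F : finFieldType) (n : nat) (x y : 'M[F]_n) :
  unipotent_type21 x -> y \in sl_class x ->
  (y - 1) * (y - 1) = 0 /\ \rank (y - 1) = 1%N.
Proof.
case/andP=> /eqP xx /eqP rk /imsetP [g gS ->].
have gu : g \in unitmx by move: gS; rewrite inE unitmxE => /eqP ->; rewrite unitr1.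
have e : rtri g x - 1 = g *m (x - 1) *m invmx g.
  by rewrite /rtri mulmxBr mulmxBl mulmx1 mulmxV.
rewrite e; split.
  rewrite -mulmxE -!mulmxA (mulmxA (invmx g)) mulVmx // mul1mx.
  by rewrite (mulmxA (x - 1)) xx mul0mx mulmx0.
by rewrite mxrankMfree ?row_free_unit ?unitmx_inv // (eqmxMfull _ _) ?row_full_unit.
Qed.
Lemma invol (F : fieldType) (n : nat) (A : 'M[F]_n) :
  (2%:R : F) = 0 -> A * A = 0 -> (1 + A) * (1 + A) = 1.
Proof.
move=> two AA; rewrite mulrDl !mulrDr !mul1r mulr1 AA addr0 -addrA.
by rewrite -mulr2n -scaler_nat two scale0r addr0.
Qed.

Lemma rtriE (F : finFieldType) (n : nat) (r t : 'M[F]_n) : r * r = 1 -> rtri r t = r * t * r.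
Proof. by move=> rr; rewrite /rtri inv_invol ?mulmxE. Qed.

Theorem mainTheorem14 (F : finFieldType) (n : nat) :
  ~~ odd #|F| -> (2 <= n)%N ->
  forall x : 'M[F]_n, x \in SL F n -> unipotent_type21 x ->
  ~ type_D (sl_class x).
Proof.
move=> ev _ x _ xu [R [S [sub _ [[_ dj _ _] [_ _ _ actS]] [r [s [rR sS neq]]]]]].
have two := char2 ev.
have rX : r \in sl_class x by apply: (subsetP sub); rewrite inE rR.
have sX : s \in sl_class x by apply: (subsetP sub); rewrite inE sS orbT.
have [AA rkA] := class_facts xu rX.
have [BB rkB] := class_facts xu sX.
have er : r = 1 + (r - 1) by rewrite addrC subrK.
have es : s = 1 + (s - 1) by rewrite addrC subrK.
move: (r - 1) (s - 1) er es AA rkA BB rkB => A B er es AA rkA BB rkB.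
have rr : r * r = 1 by rewrite er invol.
have ss : s * s = 1 by rewrite es invol.
have ABA := rank1_sandwich B rkA.
have BAB := rank1_sandwich A rkB.
rewrite -mulmxE mxtrace_mulC mulmxE in BAB.
set l := \tr (A * B) in ABA BAB.
have [_ N3] := Nrel AA BB ABA BAB.
have eu : r * s = 1 + (A + B + A * B).
  by rewrite er es mulrDl !mulrDr !mul1r mulr1 !addrA (addrAC 1 A B).
move: (A + B + A * B) eu N3 => N eu N3.
have inS y t : y \in R :|: S -> t \in S -> rtri y t \in S.
  by move=> yY tS; rewrite -actS; apply: imset2_f.
have rY : r \in R :|: S by rewrite inE rR.
have sY : s \in R :|: S by rewrite inE sS orbT.
have [l0|l0] := eqVneq l 0.
  move: N3; rewrite l0 !scale0r addr0 => N3.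
  have u4 : (r * s) ^+ 4 = 1.
    have u2 : (r * s) ^+ 2 = 1 + N * N.
      rewrite eu expr2 mulrDl !mulrDr !mul1r mulr1 addrA -(addrA 1 N N).
      by rewrite -mulr2n -scaler_nat two scale0r addr0.
    rewrite (_ : 4 = 2 * 2)%N // exprM u2 expr2 mulrDl !mulrDr !mul1r mulr1 addrA -(addrA 1).
    rewrite -mulr2n -scaler_nat two scale0r addr0 -mulrA N3 mulr0 addr0 //.
  move/negP: neq; apply; apply/eqP.
  rewrite !rtriE //.
  have e : r * (s * (r * s * r) * s) * r = (r * s) ^+ 4 * s.
    by rewrite !exprS expr0 mulr1 !mulrA -(mulrA _ s s) ss mulr1.
  by rewrite e u4 mul1r.
have sr_rs : (s * r) * (r * s) = 1 by rewrite mulrA -(mulrA s) rr mulr1 ss.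
have [d [d0 ud]] := period sr_rs.
rewrite eu in ud.
have [o [oo uo]] := odd_period two l0 N3 d0 ud.
rewrite -eu in uo.
have tk k : (r * s) ^+ (k.*2) * s \in S.
  elim: k => [|k IH]; first by rewrite expr0 mul1r.
  have := inS r _ rY (inS s _ sY IH).
  rewrite !rtriE //.
  have -> : r * (s * ((r * s) ^+ k.*2 * s) * s) * r = (r * s) ^+ (k.+1).*2 * s.
    rewrite doubleS !exprSr !mulrA -!(mulrA _ s s) !ss !mulr1.
    have cm : (r * s) * (r * s) ^+ k.*2 = (r * s) ^+ k.*2 * (r * s) by rewrite -exprS exprSr.
    by rewrite cm !mulrA.
  by [].
have := tk (o.+1)./2.
have -> : ((o.+1)./2).*2 = o.+1.
  by rewrite -[in RHS](odd_double_half o.+1) /= oo.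
rewrite exprSr uo mul1r -mulrA ss mulr1 => rS.
by move: (disjointFr dj rR); rewrite rS.
Qed.
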